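(* Let $L$ be a shift having left special factors of arbitrarily large length, and let $\mu$ be a $\sigma$-invariant, nonatomic, regular Borel probability measure on $L$, positive on nonempty cylinders, with $\mu(SP_L)=0$. For each $k>0$ let $I^{(k)}_L=\{x\in I:\phi^{-1}(\iota(x))\in Cyl_L(v^{(k)})\}$, where $I=[0,1)$. Then each $I^{(k)}_L$ is a right-open interval, and $T_L$ is a translation on it: there is a constant $c_k$ with $T_L(x)=x+c_k$ for all $x\in I^{(k)}_L$.
   Context: $A$ is a finite totally ordered alphabet. $A^{\mathbb N}$ has the lexicographic order and the Cantor topology, and $\sigma$ deletes the first letter. A shift is a closed $L\subseteq A^{\mathbb N}$ with $\sigma(L)\subseteq L$. $Fact_L$ is the set of finite factors, and $Cyl_L(v)=\{w\in L:v\text{ prefix of }w\}$. For $w\le w'$ in $L$, $[w,w']=\{w''\in L:w\le w''\le w'\}$, and $w_{L,min}=\min L$. A factor $u$ is left special if $bu\in Fact_L$ for at least two letters $b$. $SP_L$ is the set of infinite words all of whose prefixes are left special. $\{v^{(k)}\}_{k>0}$ enumerates the words $au\in Fact_L$ ($a\in A$, $u$ nonempty) with $u$ not left special and every nonempty proper prefix of $u$ left special. Construction. Put $\phi_\mu(w)=\mu([w_{L,min},w])$. Let $Z_0$ be the set of $x\in[0,1]$ with $|\phi_\mu^{-1}(x)|\ge 2$; each such preimage consists of exactly two consecutive words. Let $\hat I=[0,1]\sqcup Z_0^-$, where $Z_0^-=\{z^-:z\in Z_0\}$ is a disjoint copy of $Z_0$. Order $\hat I$ so that $z^-<z$ with nothing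 in between, extending the order of $[0,1]$, and give it the order topology. Let $\iota$ be the inclusion $[0,1]\to\hat I$, and let $\kappa:\hat I\to[0,1]$ be the identity on $[0,1]$ with $z^-\mapsto z$. Define $\phi(w)=(\phi_\mu(w))^-$ if $\phi_\mu^{-1}(\phi_\mu(w))=\{w,w'\}$ with $w<w'$, and $\phi(w)=\phi_\mu(w)$ otherwise. Set $\hat T=\phi\circ\sigma\circ\phi^{-1}$ and $T_L=\kappa\circ\hat T\circ\iota:[0,1]\to[0,1]$. *)

(* Defs.v *)
From Stdlib Require Import Reals List Classical ClassicalEpsilon.
Open Scope R_scope.
Set Implicit Arguments.

Definition word (A : Type) := nat -> A.

Definition finite_total_alphabet (A : Type) (ltA : A -> A -> Prop) : Prop :=
  (exists l : list A, forall a, In a l) /\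
  (forall a, ~ ltA a a) /\
  (forall a b c, ltA a b -> ltA b c -> ltA a c) /\
  (forall a b, a = b \/ ltA a b \/ ltA b a).

Definition shift (A : Type) (w : word A) : word A := fun n => w (S n).

Definition lexlt (A : Type) (ltA : A -> A -> Prop) (w w' : word A) : Prop :=
  exists n, (forall i, (i < n)%nat -> w i = w' i) /\ ltA (w n) (w' n).
Definition lexle (A : Type) (ltA : A -> A -> Prop) (w w' : word A) : Prop :=
  w = w' \/ lexlt ltA w w'.

Definition prefix (A : Type) (v : list A) (w : word A) : Prop :=
  forall i, (i < length v)%nat -> nth_error v i = Some (w i).

Definition agree (A : Type) (n : nat) (w w' : word A) : Prop :=
  forall i, (i < n)%nat -> w i = w' i.
Definition is_open (A : Type) (U : word A -> Prop) : Prop :=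
  forall w, U w -> exists n, forall w', agree n w w' -> U w'.
Definition is_closed (A : Type) (K : word A -> Prop) : Prop :=
  forall w, (forall n, exists w', K w' /\ agree n w w') -> K w.

Definition is_shift (A : Type) (L : word A -> Prop) : Prop :=
  is_closed L /\ (forall w, L w -> L (shift w)).

Definition Fact (A : Type) (L : word A -> Prop) (v : list A) : Prop :=
  exists w, L w /\ exists n, forall i, (i < length v)%nat -> nth_error v i = Some (w (n + i)%nat).

Definition Cyl (A : Type) (L : word A -> Prop) (v : list A) (w : word A) : Prop :=
  L w /\ prefix v w.

Definition left_special (A : Type) (L : word A -> Prop) (u : list A) : Prop :=
  exists b b', b <> b' /\ Fact L (b :: u) /\ Fact L (b' :: u).

Fixpoint wprefix (A : Type) (w : word A) (n : nat) : list A :=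
  match n with
  | O => nil
  | S m => wprefix w m ++ (w m :: nil)
  end.

Definition SP_set (A : Type) (L : word A -> Prop) (w : word A) : Prop :=
  forall n, left_special L (wprefix w n).

(** The words v^{(k)}: a u in Fact_L, u nonempty, u not left special, every
    nonempty proper prefix of u left special. (The set enumerated by k.) *)
Definition is_v_word (A : Type) (L : word A -> Prop) (v : list A) : Prop :=
  exists a u, v = a :: u /\ Fact L v /\ u <> nil /\ ~ left_special L u /\
    (forall m, (1 <= m)%nat -> (m < length u)%nat -> left_special L (firstn m u)).

Inductive borel (A : Type) : (word A -> Prop) -> Prop :=
| borel_cyl : forall v : list A, borel (fun w => prefix v w)
| borel_compl : forall E, borel E -> borel (fun w => ~ E w)
| borel_union : forall F : nat -> word A -> Prop,
    (forall n, borel (F n)) -> borel (fun w => exists n, F n w)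
| borel_ext : forall E E', borel E -> (forall w, E w <-> E' w) -> borel E'.

Definition inter (A : Type) (E F : word A -> Prop) : word A -> Prop :=
  fun w => E w /\ F w.

(** mu : a Borel probability measure on L, given as a set function whose
    values on the Borel subsets E /\ L of L are meaningful. *)
Definition borel_prob_measure_on (A : Type) (L : word A -> Prop)
  (mu : (word A -> Prop) -> R) : Prop :=
  (forall P Q, (forall w, P w <-> Q w) -> mu P = mu Q) /\
  (forall E, borel E -> 0 <= mu (inter E L)) /\
  mu L = 1 /\
  (forall F : nat -> word A -> Prop,
     (forall n, borel (F n)) ->
     (forall n m w, n <> m -> L w -> F n w -> F m w -> False) ->
     infinite_sum (fun n => mu (inter (F n) L)) (mu (inter (fun w => exists n, F n w) L))).

Definition sigma_invariant (A : Type) (L : word A -> Prop) (mu : (word A -> Prop) -> R) : Prop :=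
  forall E, borel E -> mu (inter (fun w => E (shift w)) L) = mu (inter E L).

Definition nonatomic (A : Type) (L : word A -> Prop) (mu : (word A -> Prop) -> R) : Prop :=
  forall E, borel E -> 0 < mu (inter E L) ->
    exists F, borel F /\ (forall w, L w -> F w -> E w) /\
      0 < mu (inter F L) < mu (inter E L).

(** Regular: outer regular by open sets, inner regular by compact sets
    (compact subsets of the Cantor space A^N, A finite, are exactly the closed ones). *)
Definition regular (A : Type) (L : word A -> Prop) (mu : (word A -> Prop) -> R) : Prop :=
  forall E, borel E ->
    (forall eps, 0 < eps -> exists U, is_open U /\ (forall w, L w -> E w -> U w) /\
        mu (inter U L) <= mu (inter E L) + eps) /\
    (forall eps, 0 < eps -> exists K, is_closed K /\ (forall w, L w -> K w -> E w) /\
        mu (inter E L) - eps <= mu (inter K L)).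

Definition positive_on_cylinders (A : Type) (L : word A -> Prop) (mu : (word A -> Prop) -> R) : Prop :=
  forall v, (exists w, Cyl L v w) -> 0 < mu (Cyl L v).

(** phi_mu(w) = mu([w_{L,min}, w]); since w_{L,min} = min L, the interval
    [w_{L,min}, w] is literally {w'' in L | w'' <= w}. *)
Definition phi_mu (A : Type) (ltA : A -> A -> Prop) (L : word A -> Prop)
  (mu : (word A -> Prop) -> R) (w : word A) : R :=
  mu (fun w'' => L w'' /\ lexle ltA w'' w).

(** Ihat = [0,1] ⊔ Z_0^-, represented as pairs (x, b): (x,false) is x, (x,true) is x^-.
    Only (z,true) with z in Z_0 are genuine elements; phi only takes such values. *)
Definition Ihat := (R * bool)%type.
Definition iota (x : R) : Ihat := (x, false).
Definition kappa (p : Ihat) : R := fst p.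

Definition lower_of_pair (A : Type) (ltA : A -> A -> Prop) (L : word A -> Prop)
  (mu : (word A -> Prop) -> R) (w : word A) : Prop :=
  exists w', L w' /\ lexlt ltA w w' /\ phi_mu ltA L mu w' = phi_mu ltA L mu w.

Definition phi (A : Type) (ltA : A -> A -> Prop) (L : word A -> Prop)
  (mu : (word A -> Prop) -> R) (w : word A) : Ihat :=
  (phi_mu ltA L mu w,
   if excluded_middle_informative (lower_of_pair ltA L mu w) then true else false).

(** Graph of T_L = kappa o phi o sigma o phi^{-1} o iota (phi^{-1} on L). *)
Definition T_L_graph (A : Type) (ltA : A -> A -> Prop) (L : word A -> Prop)
  (mu : (word A -> Prop) -> R) (x y : R) : Prop :=
  exists w, L w /\ phi ltA L mu w = iota x /\ y = kappa (phi ltA L mu (shift w)).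

Definition I_k (A : Type) (ltA : A -> A -> Prop) (L : word A -> Prop)
  (mu : (word A -> Prop) -> R) (v : list A) (x : R) : Prop :=
  0 <= x < 1 /\ exists w, L w /\ phi ltA L mu w = iota x /\ Cyl L v w.

(* Main.v *)
Require Import Defs.
From Stdlib Require Import Reals List Classical ClassicalEpsilon Lra Lia FunctionalExtensionality Arith.
Open Scope R_scope.
Set Implicit Arguments.

Lemma borel_full (A : Type) : borel (fun _ : word A => True).
Proof.
  apply (borel_ext (fun _ => True) (borel_cyl (@nil A))).
  intros w; split; auto. intros _ i Hi; simpl in Hi; lia.
Qed.

Lemma borel_empty (A : Type) : borel (fun _ : word A => False).
Proof.
  apply (borel_ext (fun _ => False) (borel_compl (borel_full A))).
  intros w; tauto.
Qed.

Lemma borel_union2 (A : Type) (E F : word A -> Prop) :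
  borel E -> borel F -> borel (fun w => E w \/ F w).
Proof.
  intros HE HF.
  apply (borel_ext _ (borel_union (fun n => match n with O => E | _ => F end)
     (fun n => match n with O => HE | _ => HF end))).
  intros w; split.
  - intros [[|n] H]; auto.
  - intros [H|H]; [exists O | exists 1%nat]; auto.
Qed.

Lemma borel_inter (A : Type) (E F : word A -> Prop) :
  borel E -> borel F -> borel (fun w => E w /\ F w).
Proof.
  intros HE HF.
  apply (borel_ext _ (borel_compl (borel_union2 (borel_compl HE) (borel_compl HF)))).
  intros w; split.
  - intros H. split; apply NNPP; tauto.
  - tauto.
Qed.

Lemma borel_exA (A : Type) (l : list A) (Hl : forall a, In a l) (G : A -> word A -> Prop) :
  (forall b, borel (G b)) -> borel (fun w => exists b, G b w).
Proof.
  intros HG.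
  assert (HF : forall k, borel (fun w => exists b, nth_error l k = Some b /\ G b w)).
  { intros k. destruct (nth_error l k) as [b|] eqn:E.
    - apply (borel_ext _ (HG b)). intros w; split.
      + intros H; exists b; auto.
      + intros [b' [H1 H2]]. inversion H1; subst; auto.
    - apply (borel_ext _ (borel_empty A)). intros w; split; [tauto|].
      intros [b' [H1 _]]; discriminate. }
  apply (borel_ext _ (borel_union _ HF)). intros w; split.
  - intros [k [b [_ H]]]; eauto.
  - intros [b H]. destruct (In_nth_error l b (Hl b)) as [k Hk]. eauto.
Qed.

Lemma borel_shift (A : Type) (l : list A) (Hl : forall a, In a l) (E : word A -> Prop) :
  borel E -> borel (fun w => E (shift w)).
Proof.
  intros H; induction H.
  - apply (borel_ext _ (borel_exA l Hl (fun b => prefix (b :: v)) (fun b => borel_cyl _))).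
    intros w; split.
    + intros [b Hb] i Hi. apply (Hb (S i)). simpl; lia.
    + intros Hp. exists (w O). intros i Hi. destruct i as [|i]; simpl; auto.
      apply Hp. simpl in Hi; lia.
  - exact (borel_compl IHborel).
  - exact (borel_union (fun n w => F n (shift w)) H0).
  - exact (borel_ext (fun w => E' (shift w)) IHborel (fun w => H0 (shift w))).
Qed.

Definition cons_w (A : Type) (b : A) (t : word A) : word A :=
  fun i => match i with O => b | S j => t j end.

Lemma borel_fin (A : Type) (l : list A) (Hl : forall a, In a l) :
  forall n (S : word A -> Prop), (forall t t', agree n t t' -> S t -> S t') -> borel S.
Proof.
  induction n as [|n IH]; intros S HS.
  - destruct (classic (exists t, S t)) as [[t0 Ht0]|Hn].
    + apply (borel_ext _ (borel_full A)). intros w; split; auto.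
      intros _. apply (HS t0); auto. intros i Hi; lia.
    + apply (borel_ext _ (borel_empty A)). intros w; split; [tauto|].
      intros H; apply Hn; eauto.
  - assert (HB : forall b, borel (fun w => prefix (b :: nil) w /\ S (cons_w b (shift w)))).
    { intros b. apply borel_inter. apply borel_cyl.
      apply (borel_shift l Hl (E := fun t => S (cons_w b t))).
      apply IH. intros t t' Ha. apply HS. intros [|i] Hi; simpl; auto.
      apply Ha; lia. }
    apply (borel_ext _ (borel_exA l Hl _ HB)). intros w; split.
    + intros [b [Hp HSb]]. assert (Hb : b = w O).
      { specialize (Hp O). simpl in Hp. assert (Some b = Some (w O)) by (apply Hp; lia).
        inversion H; auto. }
      subst b. apply (HS (cons_w (w O) (shift w)) w); auto. intros [|i] Hi; reflexivity.
    + intros Hw. exists (w O). split.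
      * intros [|i] Hi; simpl in *; auto; lia.
      * apply (HS w); auto. intros [|i] Hi; reflexivity.
Qed.

Lemma mu_extL (A : Type) (L : word A -> Prop) mu (HM : borel_prob_measure_on L mu)
  (S1 S2 : word A -> Prop) : (forall w, L w -> (S1 w <-> S2 w)) ->
  mu (inter S1 L) = mu (inter S2 L).
Proof.
  intros H. destruct HM as [Hx _]. apply Hx. intros w; unfold inter; split;
  intros [H1 H2]; split; auto; apply (H w H2); auto.
Qed.

Lemma sum_const (c : R) n : sum_f_R0 (fun _ => c) n = INR (S n) * c.
Proof.
  induction n; simpl sum_f_R0. simpl; lra.
  rewrite IHn. rewrite (S_INR (S n)). lra.
Qed.

Lemma mu_empty (A : Type) (L : word A -> Prop) mu (HM : borel_prob_measure_on L mu) :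
  mu (inter (fun _ => False) L) = 0.
Proof.
  pose proof HM as [_ [_ [_ Hadd]]].
  specialize (Hadd (fun _ _ => False) (fun _ => borel_empty A)).
  assert (H : infinite_sum (fun _ => mu (inter (fun _ => False) L))
                (mu (inter (fun _ => False) L))).
  { assert (E : mu (inter (fun w => exists n : nat, False) L) = mu (inter (fun _ => False) L)).
    { apply (mu_extL HM). intros w _; split; [intros [_ []]|tauto]. }
    assert (H0 := Hadd ltac:(intros; tauto)). cbv beta in H0. rewrite E in H0. exact H0. }
  set (c := mu (inter (fun _ => False) L)) in *.
  destruct (Req_dec c 0) as [|Hc]; auto. exfalso.
  assert (Hpos : Rabs c > 0) by (apply Rabs_pos_lt; auto).
  destruct (H _ Hpos) as [N HN]. specialize (HN (S N) ltac:(lia)).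
  rewrite sum_const in HN. unfold Rdist in HN.
  replace (INR (S (S N)) * c - c) with (INR (S N) * c) in HN by (rewrite (S_INR (S N)); ring).
  rewrite Rabs_mult, Rabs_pos_eq in HN by apply pos_INR.
  assert (1 <= INR (S N)) by (rewrite S_INR; pose proof (pos_INR N); lra).
  nra.
Qed.

Lemma mu_add2 (A : Type) (L : word A -> Prop) mu (HM : borel_prob_measure_on L mu)
  (S1 S2 : word A -> Prop) : borel S1 -> borel S2 ->
  (forall w, L w -> S1 w -> S2 w -> False) ->
  mu (inter (fun w => S1 w \/ S2 w) L) = mu (inter S1 L) + mu (inter S2 L).
Proof.
  intros B1 B2 Hd.
  pose proof HM as [_ [_ [_ Hadd]]].
  set (F := fun n => match n with O => S1 | 1%nat => S2 | _ => fun _ : word A => False end).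
  assert (BF : forall n, borel (F n)) by (intros [|[|n]]; simpl; auto using borel_empty).
  assert (DF : forall n m w, n <> m -> L w -> F n w -> F m w -> False).
  { intros [|[|n]] [|[|m]] w Hnm Lw; simpl; try tauto; try lia; eauto. }
  specialize (Hadd F BF DF).
  rewrite (mu_extL HM (fun w => S1 w \/ S2 w) (fun w => exists n, F n w)).
  2: { intros w _; split. intros [H|H]; [exists O|exists 1%nat]; auto.
       intros [[|[|n]] H]; simpl in H; tauto. }
  apply (uniqueness_sum _ _ _ Hadd).
  intros eps He. exists 1%nat. intros n Hn.
  assert (sum_f_R0 (fun n => mu (inter (F n) L)) n = mu (inter S1 L) + mu (inter S2 L)).
  { induction n as [|n IH]; [lia|]. destruct n as [|n]. simpl; ring.
    simpl sum_f_R0. simpl sum_f_R0 in IH. rewrite IH by lia. simpl F.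
    rewrite (mu_empty HM). ring. }
  rewrite H. unfold Rdist. rewrite Rminus_diag, Rabs_R0. lra.
Qed.

Lemma mu_mono (A : Type) (L : word A -> Prop) mu (HM : borel_prob_measure_on L mu)
  (S1 S2 : word A -> Prop) : borel S1 -> borel S2 ->
  (forall w, L w -> S1 w -> S2 w) -> mu (inter S1 L) <= mu (inter S2 L).
Proof.
  intros B1 B2 H.
  rewrite (mu_extL HM S2 (fun w => S1 w \/ (S2 w /\ ~ S1 w))).
  2: { intros w Lw; split. intros; tauto. intros [H1|[H1 _]]; auto. }
  rewrite (mu_add2 HM B1 (borel_inter B2 (borel_compl B1))) by (intros; tauto).
  pose proof HM as [_ [Hp _]].
  specialize (Hp _ (borel_inter B2 (borel_compl B1))). lra.
Qed.

Lemma mu_sub (A : Type) (L : word A -> Prop) mu (HM : borel_prob_measure_on L mu)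
  (S1 S2 : word A -> Prop) : borel S1 -> borel S2 ->
  mu (inter (fun w => S1 w \/ S2 w) L) <= mu (inter S1 L) + mu (inter S2 L).
Proof.
  intros B1 B2.
  rewrite (mu_extL HM (fun w => S1 w \/ S2 w) (fun w => S1 w \/ (S2 w /\ ~ S1 w))).
  2: { intros w Lw; split. intros; tauto. intros [H1|[H1 _]]; auto. }
  rewrite (mu_add2 HM B1 (borel_inter B2 (borel_compl B1))) by (intros; tauto).
  pose proof (mu_mono HM (borel_inter B2 (borel_compl B1)) B2 (fun w _ H => proj1 H)). lra.
Qed.

Lemma mu_nonneg (A : Type) (L : word A -> Prop) mu (HM : borel_prob_measure_on L mu)
  (S1 : word A -> Prop) : borel S1 -> 0 <= mu (inter S1 L).
Proof. intros B; destruct HM as [_ [Hp _]]; auto. Qed.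

Lemma mu_full (A : Type) (L : word A -> Prop) mu (HM : borel_prob_measure_on L mu) :
  mu (inter (fun _ => True) L) = 1.
Proof.
  pose proof HM as [Hx [_ [H1 _]]]. rewrite <- H1. apply Hx.
  intros w; unfold inter; tauto.
Qed.

Lemma mu_le1 (A : Type) (L : word A -> Prop) mu (HM : borel_prob_measure_on L mu)
  (S1 : word A -> Prop) : borel S1 -> mu (inter S1 L) <= 1.
Proof.
  intros B. rewrite <- (mu_full HM). apply (mu_mono HM B (borel_full A)); auto.
Qed.

Lemma least_nat (P : nat -> Prop) : (exists n, P n) ->
  exists n, P n /\ forall m, (m < n)%nat -> ~ P m.
Proof.
  intros [n Hn]. apply NNPP; intros Hno.
  assert (forall k, forall m, (m <= k)%nat -> ~ P m).
  { induction k; intros m Hm HP.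
    - apply Hno; exists m; split; auto. intros; lia.
    - destruct (Nat.eq_dec m (S k)).
      + subst. apply Hno. exists (S k); split; auto. intros m' Hm'. apply IHk; lia.
      + apply (IHk m); auto; lia. }
  apply (H n n); auto.
Qed.

Section Lex.
End Lex.

Lemma lt_irr A (lt : A -> A -> Prop) : finite_total_alphabet lt -> forall a, ~ lt a a.
Proof. intros [_ [H _]]; auto. Qed.
Lemma lt_trans' A (lt : A -> A -> Prop) : finite_total_alphabet lt -> forall a b c, lt a b -> lt b c -> lt a c.
Proof. intros [_ [_ [H _]]]; eauto. Qed.
Lemma lt_tri A (lt : A -> A -> Prop) : finite_total_alphabet lt -> forall a b, a = b \/ lt a b \/ lt b a.
Proof. intros [_ [_ [_ H]]]; eauto. Qed.

Lemma lexlt_irr A (lt : A -> A -> Prop) (F : finite_total_alphabet lt) w : ~ lexlt lt w w.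
Proof. intros [n [_ H]]. eapply lt_irr; eauto. Qed.

Lemma lexlt_trans A (lt : A -> A -> Prop) (F : finite_total_alphabet lt) w1 w2 w3 :
  lexlt lt w1 w2 -> lexlt lt w2 w3 -> lexlt lt w1 w3.
Proof.
  intros [n [Hn Ln]] [m [Hm Lm]].
  destruct (lt_eq_lt_dec n m) as [[H|H]|H].
  - exists n; split. intros i Hi; rewrite Hn, Hm; auto; lia. rewrite <- (Hm n H); auto.
  - subst. exists m; split. intros i Hi; rewrite Hn, Hm; auto. eapply lt_trans'; eauto.
  - exists m; split. intros i Hi; rewrite Hn, Hm; auto; lia. rewrite (Hn m H); auto.
Qed.

Lemma lexlt_asym A (lt : A -> A -> Prop) (F : finite_total_alphabet lt) w1 w2 :
  lexlt lt w1 w2 -> lexlt lt w2 w1 -> False.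
Proof. intros H1 H2. apply (lexlt_irr F (w:=w1)). eapply lexlt_trans; eauto. Qed.

Lemma lex_tri A (lt : A -> A -> Prop) (F : finite_total_alphabet lt) w1 w2 :
  w1 = w2 \/ lexlt lt w1 w2 \/ lexlt lt w2 w1.
Proof.
  destruct (classic (exists i, w1 i <> w2 i)) as [Hex|Hno].
  - destruct (least_nat _ Hex) as [n [Hn Hm]].
    assert (Ha : forall i, (i < n)%nat -> w1 i = w2 i).
    { intros i Hi. apply NNPP. apply Hm; auto. }
    destruct (lt_tri F (w1 n) (w2 n)) as [E|[E|E]]; [tauto| |].
    + right; left. exists n; auto.
    + right; right. exists n; split; auto. intros i Hi; symmetry; auto.
  - left. apply functional_extensionality. intros i. apply NNPP. intros H; apply Hno; eauto.
Qed.

Lemma lexle_lt_false A (lt : A -> A -> Prop) (F : finite_total_alphabet lt) w1 w2 :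
  lexle lt w1 w2 -> lexlt lt w2 w1 -> False.
Proof.
  intros [E|H] H2. subst. eapply lexlt_irr; eauto. eapply lexlt_asym; eauto.
Qed.

Lemma lexle_antisym A (lt : A -> A -> Prop) (F : finite_total_alphabet lt) w1 w2 :
  lexle lt w1 w2 -> lexle lt w2 w1 -> w1 = w2.
Proof.
  intros H1 [E|H2]; auto. exfalso. eapply lexle_lt_false; eauto.
Qed.

Lemma lexle_trans A (lt : A -> A -> Prop) (F : finite_total_alphabet lt) w1 w2 w3 :
  lexle lt w1 w2 -> lexle lt w2 w3 -> lexle lt w1 w3.
Proof.
  intros [E|H1] [E'|H2]; subst; unfold lexle; auto. right; eapply lexlt_trans; eauto.
Qed.

Lemma lexle_or_lt A (lt : A -> A -> Prop) (F : finite_total_alphabet lt) w1 w2 :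
  lexle lt w1 w2 \/ lexlt lt w2 w1.
Proof.
  destruct (lex_tri F w1 w2) as [E|[E|E]]; unfold lexle; tauto.
Qed.

Lemma lexlt_le A (lt : A -> A -> Prop) w1 w2 : lexlt lt w1 w2 -> lexle lt w1 w2.
Proof. right; auto. Qed.

Lemma sandwich A (lt : A -> A -> Prop) (F : finite_total_alphabet lt) n s s' t :
  agree n s s' -> lexlt lt s' t -> lexle lt t s -> agree n s t.
Proof.
  intros Hag [j [Hj Lj]] [E|[k [Hk Lk]]].
  - subst. intros i Hi; auto.
  - destruct (le_lt_dec n j) as [Hnj|Hjn].
    + intros i Hi. rewrite <- Hj by lia. apply Hag; auto.
    + exfalso. destruct (lt_eq_lt_dec k j) as [[H|H]|H].
      * rewrite (Hag k ltac:(lia)), (Hj k H) in Lk. eapply lt_irr; eauto.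
      * subst j. rewrite (Hag k Hjn) in Lk. eapply lt_irr; [eauto|]. eapply lt_trans'; eauto.
      * rewrite (Hk j H), (Hag j Hjn) in Lj. eapply lt_irr; eauto.
Qed.

Lemma flip_fta A (lt : A -> A -> Prop) : finite_total_alphabet lt ->
  finite_total_alphabet (fun a b => lt b a).
Proof.
  intros [H1 [H2 [H3 H4]]]. split; auto. split; auto. split.
  intros a b c X Y; eauto. intros a b; destruct (H4 a b); tauto.
Qed.

Lemma flip_lexle A (lt : A -> A -> Prop) w1 w2 :
  lexle (fun a b => lt b a) w1 w2 -> lexle lt w2 w1.
Proof.
  intros [E|[n [Hn Ln]]]; [left; auto|right]. exists n; split; auto.
  intros i Hi; symmetry; auto.
Qed.

Lemma least_letter A (lt : A -> A -> Prop) (F : finite_total_alphabet lt) (P : A -> Prop) :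
  (exists b, P b) -> exists b, P b /\ forall b', P b' -> ~ lt b' b.
Proof.
  destruct F as [[l Hl] [Hirr [Htr Htri]]].
  assert (Hgen : forall l', (exists b, In b l' /\ P b) ->
     exists b, P b /\ forall b', In b' l' -> P b' -> ~ lt b' b).
  { induction l' as [|x l' IH]; intros [b [Hb Pb]]. destruct Hb.
    destruct (classic (exists b, In b l' /\ P b)) as [Hex|Hno].
    - destruct (IH Hex) as [c [Pc Hc]].
      destruct (classic (P x /\ lt x c)) as [[Px Lx]|Hn].
      + exists x; split; auto. intros b' [E|Hb'] Pb'. subst b'; auto.
        intros L'; apply (Hc b' Hb' Pb'); eauto.
      + exists c; split; auto. intros b' [E|Hb'] Pb'; auto. subst b'. tauto.
    - destruct Hb as [E|Hb]; [|exfalso; eauto]. subst b.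
      exists x; split; auto. intros b' [E|Hb'] Pb'. subst b'; auto. exfalso; eauto. }
  intros [b Pb]. destruct (Hgen l) as [c [Pc Hc]]; eauto.
Qed.

Lemma agree_sym A n (w w' : word A) : agree n w w' -> agree n w' w.
Proof. intros H i Hi; symmetry; auto. Qed.
Lemma agree_trans A n (w1 w2 w3 : word A) : agree n w1 w2 -> agree n w2 w3 -> agree n w1 w3.
Proof. intros H1 H2 i Hi; rewrite H1; auto. Qed.
Lemma agree_le A n m (w w' : word A) : (n <= m)%nat -> agree m w w' -> agree n w w'.
Proof. intros H1 H2 i Hi; apply H2; lia. Qed.

Lemma closed_min A (lt : A -> A -> Prop) (F : finite_total_alphabet lt) (S : word A -> Prop) :
  is_closed S -> (exists s, S s) -> exists m, S m /\ forall s, S s -> lexle lt m s.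
Proof.
  intros HC [s0 Hs0].
  set (Pn := fun k (w s : word A) => S s /\ agree k s w /\
                forall s', S s' -> agree k s' w -> ~ lt (s' k) (s k)).
  assert (Hex : forall k w, S w -> exists s, Pn k w s).
  { intros k w Sw.
    destruct (least_letter F (fun b => exists s, S s /\ agree k s w /\ s k = b)) as [b [[s [Ss [As Eb]]] Hb]].
    { exists (w k); exists w; split; auto. split; auto. intros i _; auto. }
    exists s. split; auto. split; auto. intros s' Ss' As'. subst b.
    apply Hb. eauto. }
  set (inh := inhabits s0).
  set (ws := fix ws (n : nat) : word A := match n with O => s0 | S k => epsilon inh (Pn k (ws k)) end).
  assert (Hws : forall n, S (ws n) /\ Pn n (ws n) (ws (Datatypes.S n))).
  { induction n as [|n IH].
    - split; auto. simpl. apply epsilon_spec. apply Hex; auto.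
    - split. apply (proj1 (proj2 IH)). simpl ws at 2. apply epsilon_spec. apply Hex.
      apply (proj1 (proj2 IH)). }
  assert (Hag : forall n m, (n <= m)%nat -> agree n (ws m) (ws n)).
  { intros n m Hnm. induction Hnm. intros i _; auto.
    apply agree_trans with (ws m); auto. apply agree_le with m; auto.
    apply (proj2 (Hws m)). }
  set (m := fun i => ws (Datatypes.S i) i).
  assert (Hm : forall n, agree n m (ws n)).
  { intros n i Hi. unfold m. symmetry. apply (Hag (Datatypes.S i) n); lia. }
  assert (Sm : S m).
  { apply HC. intros n. exists (ws n). split. apply Hws. apply Hm. }
  exists m; split; auto. intros s Ss.
  destruct (lexle_or_lt F m s) as [H|[n [Hn Ln]]]; auto. exfalso.
  destruct (proj2 (Hws n)) as [_ [_ Hmin]].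
  apply (Hmin s Ss). apply agree_trans with m; auto. exact Ln.
Qed.

Lemma closed_max A (lt : A -> A -> Prop) (F : finite_total_alphabet lt) (S : word A -> Prop) :
  is_closed S -> (exists s, S s) -> exists m, S m /\ forall s, S s -> lexle lt s m.
Proof.
  intros HC Hne. destruct (closed_min (flip_fta F) HC Hne) as [m [Sm Hm]].
  exists m; split; auto. intros s Ss. apply flip_lexle; auto.
Qed.

Definition before A (lt : A -> A -> Prop) (p : list A) (t : word A) : Prop :=
  exists n c, (n < length p)%nat /\ (forall i, (i < n)%nat -> nth_error p i = Some (t i)) /\
    nth_error p n = Some c /\ lt (t n) c.
Definition after A (lt : A -> A -> Prop) (p : list A) (t : word A) : Prop :=
  exists n c, (n < length p)%nat /\ (forall i, (i < n)%nat -> nth_error p i = Some (t i)) /\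
    nth_error p n = Some c /\ lt c (t n).

Lemma pba_tri A (lt : A -> A -> Prop) (F : finite_total_alphabet lt) p t :
  before lt p t \/ prefix p t \/ after lt p t.
Proof.
  destruct (classic (prefix p t)) as [H|H]; [tauto|].
  assert (Hex : exists i, (i < length p)%nat /\ nth_error p i <> Some (t i)).
  { apply NNPP; intros Hn; apply H; intros i Hi. apply NNPP; intros Hne; apply Hn; eauto. }
  destruct (least_nat _ Hex) as [n [[Hn1 Hn2] Hm]].
  assert (Hpre : forall i, (i < n)%nat -> nth_error p i = Some (t i)).
  { intros i Hi. apply NNPP; intros Hne. apply (Hm i Hi). split; auto; lia. }
  destruct (nth_error p n) as [c|] eqn:Ec.
  2: { apply nth_error_None in Ec; lia. }
  destruct (lt_tri F (t n) c) as [E|[E|E]].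
  - subst; tauto.
  - left; exists n, c; auto.
  - right; right; exists n, c; auto.
Qed.

Lemma before_lt A (lt : A -> A -> Prop) p w t : prefix p w -> before lt p t -> lexlt lt t w.
Proof.
  intros Hw [n [c [Hn [Hi [Hc L]]]]]. exists n; split.
  - intros i Hi'. specialize (Hi i Hi'). rewrite (Hw i) in Hi by lia. inversion Hi; auto.
  - rewrite (Hw n Hn) in Hc. inversion Hc; subst; auto.
Qed.

Lemma after_lt A (lt : A -> A -> Prop) p w t : prefix p w -> after lt p t -> lexlt lt w t.
Proof.
  intros Hw [n [c [Hn [Hi [Hc L]]]]]. exists n; split.
  - intros i Hi'. specialize (Hi i Hi'). rewrite (Hw i) in Hi by lia. inversion Hi; auto.
  - rewrite (Hw n Hn) in Hc. inversion Hc; subst; auto.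
Qed.

Lemma before_prefix A (lt : A -> A -> Prop) (F : finite_total_alphabet lt) p t :
  before lt p t -> prefix p t -> False.
Proof. intros H1 H2. eapply lexlt_irr; eauto. eapply before_lt; eauto. Qed.
Lemma after_prefix A (lt : A -> A -> Prop) (F : finite_total_alphabet lt) p t :
  after lt p t -> prefix p t -> False.
Proof. intros H1 H2. eapply lexlt_irr; eauto. eapply after_lt; eauto. Qed.

Lemma before_after A (lt : A -> A -> Prop) (F : finite_total_alphabet lt) p t :
  before lt p t -> after lt p t -> False.
Proof.
  intros [n [c [Hn [Hi [Hc L]]]]] [n' [c' [Hn' [Hi' [Hc' L']]]]].
  destruct (lt_eq_lt_dec n n') as [[H|H]|H].
  - rewrite (Hi' n H) in Hc. inversion Hc; subst. eapply lt_irr; eauto.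
  - subst. rewrite Hc in Hc'. inversion Hc'; subst. eapply lt_irr; eauto. eapply lt_trans'; eauto.
  - rewrite (Hi n' H) in Hc'. inversion Hc'; subst. eapply lt_irr; eauto.
Qed.

Definition findet A n (S : word A -> Prop) := forall t t', agree n t t' -> S t -> S t'.

Lemma findet_closed A n (S : word A -> Prop) : findet n S -> is_closed S.
Proof.
  intros H w Hw. destruct (Hw n) as [w' [Sw' Ag]]. apply (H w'); auto. apply agree_sym; auto.
Qed.

Lemma closed_inter A (S1 S2 : word A -> Prop) : is_closed S1 -> is_closed S2 ->
  is_closed (fun w => S1 w /\ S2 w).
Proof.
  intros H1 H2 w Hw. split.
  - apply H1. intros n; destruct (Hw n) as [w' [[] ?]]; eauto.
  - apply H2. intros n; destruct (Hw n) as [w' [[] ?]]; eauto.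
Qed.

Lemma before_findet A (lt : A -> A -> Prop) p : findet (length p) (before lt p).
Proof.
  intros t t' Ag [n [c [Hn [Hi [Hc L]]]]]. exists n, c. split; auto. split.
  intros i Hi'. rewrite <- Ag by lia. auto. split; auto. rewrite <- Ag; auto.
Qed.
Lemma after_findet A (lt : A -> A -> Prop) p : findet (length p) (after lt p).
Proof.
  intros t t' Ag [n [c [Hn [Hi [Hc L]]]]]. exists n, c. split; auto. split.
  intros i Hi'. rewrite <- Ag by lia. auto. split; auto. rewrite <- Ag; auto.
Qed.
Lemma prefix_findet A (p : list A) : findet (length p) (prefix p).
Proof. intros t t' Ag H i Hi. rewrite <- Ag; auto. Qed.
Lemma agree_findet A n (s : word A) : findet n (fun t => agree n s t).
Proof. intros t t' Ag H. eapply agree_trans; eauto. Qed.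

Lemma borel_sing A (l : list A) (Hl : forall a, In a l) (s : word A) : borel (fun t => t = s).
Proof.
  assert (B : borel (fun t => ~ exists n, ~ agree n s t)).
  { apply borel_compl. apply borel_union. intros n. apply borel_compl.
    apply (borel_fin l Hl (n:=n)). apply agree_findet. }
  apply (borel_ext _ B). intros t; split.
  - intros H. apply functional_extensionality; intros i. apply NNPP; intros Hne.
    apply H. exists (S i). intros Ha. apply Hne. symmetry. apply Ha. lia.
  - intros -> [n Hn]. apply Hn. intros i _; auto.
Qed.

Lemma borel_lexle A (l : list A) (Hl : forall a, In a l) (lt : A -> A -> Prop) (s : word A) :
  borel (fun t => lexle lt t s).
Proof.
  assert (B : borel (fun t => t = s \/ exists n, agree n s t /\ lt (t n) (s n))).
  { apply borel_union2. apply (borel_sing l Hl). apply borel_union. intros n.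
    apply (borel_fin l Hl (n:=S n)). intros t t' Ag [H1 H2]. split.
    intros i Hi. rewrite H1, Ag; auto; lia. rewrite <- Ag; auto. }
  apply (borel_ext _ B). intros t; unfold lexle, lexlt; split.
  - intros [H|[n [H1 H2]]]; auto. right; exists n; split; auto. intros i Hi; symmetry; auto.
  - intros [H|[n [H1 H2]]]; auto. right; exists n; split; auto. intros i Hi; symmetry; auto.
Qed.

Lemma open_borel A (l : list A) (Hl : forall a, In a l) (U : word A -> Prop) :
  is_open U -> borel U.
Proof.
  intros HU.
  assert (B : borel (fun t => exists n, forall t', agree n t t' -> U t')).
  { apply borel_union. intros n. apply (borel_fin l Hl (n:=n)).
    intros t t' Ag H t'' Ag'. apply H. eapply agree_trans; eauto. }
  apply (borel_ext _ B). intros t; split.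
  - intros [n Hn]. apply Hn. intros i _; auto.
  - intros Ht. destruct (HU t Ht) as [n Hn]; eauto.
Qed.

Lemma prefix_cons A (a : A) u t : prefix (a :: u) t <-> t O = a /\ prefix u (shift t).
Proof.
  split.
  - intros H. split. assert (Some a = Some (t O)) by (apply (H O); simpl; lia). inversion H0; auto.
    intros i Hi. apply (H (S i)). simpl; lia.
  - intros [H1 H2] [|i] Hi; simpl. rewrite H1; auto. apply H2. simpl in Hi; lia.
Qed.

Lemma lexle_shift A (lt : A -> A -> Prop) (F : finite_total_alphabet lt) (t w : word A) :
  t O = w O -> (lexle lt (shift t) (shift w) <-> lexle lt t w).
Proof.
  intros E. split.
  - intros [H|[n [Hn Ln]]].
    + left. apply functional_extensionality. intros [|i]; auto.
      change (shift t i = shift w i). rewrite H; auto.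
    + right. exists (S n). split; auto. intros [|i] Hi; auto. apply Hn. lia.
  - intros [H|[n [Hn Ln]]].
    + left. subst; auto.
    + right. destruct n as [|n]. rewrite E in Ln. exfalso; eapply lt_irr; eauto.
      exists n. split; auto. intros i Hi. apply (Hn (S i)). lia.
Qed.

Lemma iter_shift A (w : word A) n i : Nat.iter n (@shift A) w i = w (n + i)%nat.
Proof.
  revert i; induction n; intros i; simpl; auto. unfold shift at 1. rewrite IHn. f_equal; lia.
Qed.

Lemma iter_shift_L A (L : word A -> Prop) : is_shift L -> forall n w, L w -> L (Nat.iter n (@shift A) w).
Proof. intros [_ H] n w Lw; induction n; simpl; auto. Qed.

Lemma fact_cyl A (L : word A -> Prop) : is_shift L -> forall v, Fact L v -> exists w, L w /\ prefix v w.
Proof.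
  intros HS v [w [Lw [n Hn]]]. exists (Nat.iter n (@shift A) w). split.
  apply iter_shift_L; auto. intros i Hi. rewrite iter_shift. auto.
Qed.

Lemma phi_eq A (lt : A -> A -> Prop) (L : word A -> Prop) mu (HM : borel_prob_measure_on L mu) w :
  phi_mu lt L mu w = mu (inter (fun t => lexle lt t w) L).
Proof. destruct HM as [Hx _]. apply Hx. intros t; unfold inter; tauto. Qed.

Lemma sing0 A (l : list A) (Hl : forall a, In a l) (L : word A -> Prop) mu
  (HM : borel_prob_measure_on L mu) (HN : nonatomic L mu) s :
  mu (inter (fun t => t = s) L) = 0.
Proof.
  pose proof (mu_nonneg HM (borel_sing l Hl s)).
  destruct (Req_dec (mu (inter (fun t => t = s) L)) 0) as [E|Hne]; auto. exfalso.
  destruct (HN _ (borel_sing l Hl s)) as [G [BG [HG [H1 H2]]]]. lra.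
  destruct (classic (G s /\ L s)) as [[Gs Ls]|Hn].
  - rewrite (mu_extL HM G (fun t => t = s)) in H2. lra.
    intros t Lt; split. apply HG; auto. intros ->; auto.
  - rewrite (mu_extL HM G (fun _ => False)) in H1. rewrite (mu_empty HM) in H1. lra.
    intros t Lt; split; [|tauto]. intros Gt. apply Hn. pose proof (HG t Lt Gt). subst; auto.
Qed.

Lemma cyl_small A (l : list A) (Hl : forall a, In a l) (L : word A -> Prop) mu
  (HM : borel_prob_measure_on L mu) (HN : nonatomic L mu) (HR : regular L mu) s eps :
  L s -> 0 < eps -> exists n, mu (inter (fun t => agree n s t) L) <= eps.
Proof.
  intros Ls He. destruct (HR _ (borel_sing l Hl s)) as [Hout _].
  destruct (Hout eps He) as [U [HU [HsU Hle]]].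
  rewrite (sing0 l Hl HM HN), Rplus_0_l in Hle.
  destruct (HU s (HsU s Ls eq_refl)) as [n Hn]. exists n.
  eapply Rle_trans; [|exact Hle]. apply (mu_mono HM).
  apply (borel_fin l Hl (n:=n)). apply agree_findet. apply (open_borel l Hl HU).
  intros t _ Ag. apply Hn; auto.
Qed.

Lemma phi_mono A (lt : A -> A -> Prop) (F : finite_total_alphabet lt) (l : list A)
  (Hl : forall a, In a l) (L : word A -> Prop) mu (HM : borel_prob_measure_on L mu) s1 s2 :
  lexle lt s1 s2 -> phi_mu lt L mu s1 <= phi_mu lt L mu s2.
Proof.
  intros H. rewrite !(phi_eq lt HM). apply (mu_mono HM); try apply (borel_lexle l Hl).
  intros t _ Ht. eapply lexle_trans; eauto.
Qed.

Lemma surj A (lt : A -> A -> Prop) (F : finite_total_alphabet lt) (l : list A)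
  (Hl : forall a, In a l) (L : word A -> Prop) mu (HS : is_shift L)
  (HM : borel_prob_measure_on L mu) (HN : nonatomic L mu) (HR : regular L mu)
  (Lne : exists w, L w) x :
  0 <= x < 1 -> exists w, L w /\ phi_mu lt L mu w = x /\ ~ lower_of_pair lt L mu w /\
     (forall s, L s -> phi_mu lt L mu s <= x -> lexle lt s w).
Proof.
  intros Hx.
  set (Phi := phi_mu lt L mu) in *.
  assert (BL : forall s, borel (fun t => lexle lt t s)) by (intros; apply (borel_lexle l Hl)).
  assert (PE : forall s, Phi s = mu (inter (fun t => lexle lt t s) L)) by (intros; apply (phi_eq lt HM)).
  assert (LC : is_closed L) by apply HS.
  set (K := fun s => L s /\ Phi s <= x).
  assert (KC : is_closed K).
  { intros s Hs. assert (Ls : L s). { apply LC. intros n; destruct (Hs n) as [s' [[] ?]]; eauto. }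
    split; auto. apply Rnot_lt_le; intros Hlt.
    destruct (cyl_small l Hl HM HN HR s (eps := (Phi s - x)/2) Ls ltac:(lra)) as [n Hn].
    destruct (Hs n) as [s' [[Ls' Hs'] Ag]].
    destruct (lexle_or_lt F s s') as [H|H].
    - pose proof (phi_mono F l Hl HM H). fold Phi in H0. lra.
    - assert (Phi s <= Phi s' + mu (inter (fun t => agree n s t) L)).
      { rewrite !PE. eapply Rle_trans; [|apply (mu_sub HM (BL s'))].
        apply (mu_mono HM). apply BL. apply borel_union2. apply BL.
        apply (borel_fin l Hl (n:=n)); apply agree_findet.
        intros t Lt Ht. destruct (lexle_or_lt F t s') as [H1|H1]; auto.
        right. eapply sandwich; eauto. apply (borel_fin l Hl (n:=n)); apply agree_findet. }
      lra. }
  assert (Kne : exists s, K s).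
  { destruct (closed_min F LC Lne) as [m0 [Lm0 Hm0]]. exists m0. split; auto.
    assert (Phi m0 <= mu (inter (fun t => t = m0) L)).
    { rewrite PE. apply (mu_mono HM); auto. apply (borel_sing l Hl).
      intros t Lt Ht. apply (lexle_antisym F); auto. }
    rewrite (sing0 l Hl HM HN) in H. lra. }
  destruct (closed_max F KC Kne) as [w [[Lw Kw] Hmax]].
  assert (NL : ~ lower_of_pair lt L mu w).
  { intros [w' [Lw' [Hlt He]]]. assert (lexle lt w' w). { apply Hmax; split; auto. change (Phi w' <= x). change (Phi w' = Phi w) in He. rewrite He. exact Kw. }
    eapply lexle_lt_false; eauto. }
  exists w. split; auto. split; [|split; auto].
  2: { intros s Ls Hs. apply Hmax; split; auto. }
  apply Rle_antisym; auto. apply Rnot_lt_le; intros Hlt.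
  destruct (cyl_small l Hl HM HN HR w (eps := (x - Phi w)/2) Lw ltac:(lra)) as [n Hn].
  set (R := fun t => lexlt lt w t /\ ~ agree n w t).
  assert (RF : findet n R).
  { intros t t' Ag [[j [Hj Lj]] Hna]. assert (Hjn : (j < n)%nat).
    { destruct (le_lt_dec n j) as [H|H]; auto. exfalso. apply Hna. intros i Hi; apply Hj; lia. }
    split. exists j; split. intros i Hi. rewrite Hj, Ag; auto; lia. rewrite <- Ag; auto.
    intros Hag. apply Hna. eapply agree_trans; eauto. apply agree_sym; auto. }
  assert (BA : borel (fun t => agree n w t)) by (apply (borel_fin l Hl (n:=n)); apply agree_findet).
  destruct (classic (exists t, L t /\ R t)) as [Hex|Hno].
  - destruct (closed_min F (closed_inter LC (findet_closed RF)) Hex) as [s0 [[Ls0 Rs0] Hs0]].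
    assert (Phi s0 > x).
    { apply Rnot_le_gt; intros Hle. pose proof (Hmax s0 (conj Ls0 Hle)).
      eapply lexle_lt_false; eauto. apply Rs0. }
    assert (Phi s0 <= Phi w + mu (inter (fun t => agree n w t) L) + mu (inter (fun t => t = s0) L)).
    { rewrite !PE. eapply Rle_trans; [|apply Rplus_le_compat_r; apply (mu_sub HM (BL w) BA)].
      eapply Rle_trans; [|apply (mu_sub HM); [apply borel_union2; auto| apply (borel_sing l Hl)]].
      apply (mu_mono HM (BL s0) (borel_union2 (borel_union2 (BL w) BA) (borel_sing l Hl s0))).
      intros t Lt Ht. destruct (lexle_or_lt F t w) as [H1|H1]; auto.
      destruct (classic (agree n w t)) as [H2|H2]; auto.
      right. apply (lexle_antisym F); auto. apply Hs0. split; auto. split; auto. }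
    rewrite (sing0 l Hl HM HN) in H0. lra.
  - assert (1 <= Phi w + mu (inter (fun t => agree n w t) L)).
    { rewrite <- (mu_full HM), PE. eapply Rle_trans; [|apply (mu_sub HM (BL w) BA)].
      apply (mu_mono HM (borel_full A) (borel_union2 (BL w) BA)).
      intros t Lt _. destruct (lexle_or_lt F t w) as [H1|H1]; auto.
      destruct (classic (agree n w t)) as [H2|H2]; auto.
      exfalso. apply Hno. exists t. split; auto. split; auto. }
    lra.
Qed.

Lemma phi_iota A (lt : A -> A -> Prop) (L : word A -> Prop) mu w x :
  phi lt L mu w = iota x -> phi_mu lt L mu w = x /\ ~ lower_of_pair lt L mu w.
Proof.
  unfold phi, iota. destruct (excluded_middle_informative (lower_of_pair lt L mu w)) as [H|H];
  intros E; inversion E; auto.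
Qed.

Lemma phi_iota2 A (lt : A -> A -> Prop) (L : word A -> Prop) mu w :
  ~ lower_of_pair lt L mu w -> phi lt L mu w = iota (phi_mu lt L mu w).
Proof.
  unfold phi, iota. destruct (excluded_middle_informative (lower_of_pair lt L mu w)) as [H|H];
  intros E; [tauto|auto].
Qed.

Lemma decomp A (lt : A -> A -> Prop) (F : finite_total_alphabet lt) (l : list A)
  (Hl : forall a, In a l) (L : word A -> Prop) mu (HM : borel_prob_measure_on L mu) p s :
  prefix p s -> phi_mu lt L mu s =
    mu (inter (before lt p) L) + mu (inter (fun t => prefix p t /\ lexle lt t s) L).
Proof.
  intros Ps. rewrite (phi_eq lt HM).
  rewrite (mu_extL HM (fun t => lexle lt t s) (fun t => before lt p t \/ (prefix p t /\ lexle lt t s))).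
  apply (mu_add2 HM). apply (borel_fin l Hl (n:=length p)); apply before_findet.
  apply borel_inter. apply borel_cyl. apply (borel_lexle l Hl).
  intros t _ H1 [H2 _]. eapply before_prefix; eauto.
  intros t _; split.
  - intros H. destruct (pba_tri F p t) as [H1|[H1|H1]]; auto.
    exfalso. eapply lexle_lt_false; eauto. eapply after_lt; eauto.
  - intros [H|[_ H]]; auto. right. eapply before_lt; eauto.
Qed.

Theorem mainTheorem12 (A : Type) (ltA : A -> A -> Prop) (L : word A -> Prop)
  (mu : (word A -> Prop) -> R) :
  finite_total_alphabet ltA ->
  is_shift L ->
  (forall n : nat, exists u, (n <= length u)%nat /\ left_special L u) ->
  borel_prob_measure_on L mu ->
  sigma_invariant L mu ->
  nonatomic L mu ->
  regular L mu ->
  positive_on_cylinders L mu ->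
  mu (inter (SP_set L) L) = 0 ->
  forall v : list A, is_v_word L v ->
    (exists a b, a < b /\ forall x, I_k ltA L mu v x <-> (a <= x < b)) /\
    (exists c, forall x y, I_k ltA L mu v x -> T_L_graph ltA L mu x y -> y = x + c).
Proof.
  intros F HS _ HM Hinv HN HR HP _ v Hv.
  pose proof F as [[l Hl] _].
  destruct Hv as [a [u [Ev [Fv [_ [Hnls _]]]]]].
  destruct (fact_cyl HS Fv) as [w0 [Lw0 Pw0]].
  assert (LC : is_closed L) by apply HS.
  set (Phi := phi_mu ltA L mu).
  assert (BL : forall s, borel (fun t => lexle ltA t s)) by (intros; apply (borel_lexle l Hl)).
  assert (PE : forall s, Phi s = mu (inter (fun t => lexle ltA t s) L)) by (intros; apply (phi_eq ltA HM)).
  assert (Bb : forall p, borel (before ltA p)) by (intros p; apply (borel_fin l Hl (n:=length p)); apply before_findet).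
  assert (Bp : borel (prefix v)) by apply borel_cyl.
  set (a0 := mu (inter (before ltA v) L)).
  set (b0 := mu (inter (fun t => before ltA v t \/ prefix v t) L)).
  assert (Eb : b0 = a0 + mu (inter (prefix v) L)).
  { apply (mu_add2 HM); auto. intros t _ H1 H2; eapply before_prefix; eauto. }
  assert (Pos : 0 < mu (inter (prefix v) L)).
  { pose proof (HP v (ex_intro _ w0 (conj Lw0 Pw0))). destruct HM as [Hx _].
    rewrite (Hx (inter (prefix v) L) (Cyl L v)); auto. intros t; unfold inter, Cyl; tauto. }
  assert (Ha0 : 0 <= a0) by (apply (mu_nonneg HM); auto).
  assert (Hb0 : b0 <= 1) by (apply (mu_le1 HM); apply borel_union2; auto).
  split.
  - exists a0, b0. split; [lra|]. intros x. split.
    + intros [Hx [w [Lw [Hphi [_ Pw]]]]].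
      destruct (phi_iota Hphi) as [Ex NL]. fold Phi in Ex.
      assert (a0 <= Phi w).
      { rewrite PE. apply (mu_mono HM); auto. intros t _ Ht. right. eapply before_lt; eauto. }
      assert (Phi w <= b0).
      { rewrite PE. apply (mu_mono HM); auto. apply borel_union2; auto.
        intros t _ Ht. destruct (pba_tri F v t) as [H1|[H1|H1]]; auto.
        exfalso. eapply lexle_lt_false; eauto. eapply after_lt; eauto. }
      split; [lra|]. apply Rnot_le_lt; intros Hge.
      destruct (classic (exists t, L t /\ after ltA v t)) as [Hex|Hno].
      * destruct (closed_min F (closed_inter LC (findet_closed (@after_findet A ltA v))) Hex)
          as [s0 [[Ls0 As0] Hs0]].
        assert (Phi s0 <= b0 + mu (inter (fun t => t = s0) L)).
        { rewrite PE. eapply Rle_trans; [|apply (mu_sub HM); [apply borel_union2; auto|apply (borel_sing l Hl)]].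
          apply (mu_mono HM (BL s0) (borel_union2 (borel_union2 (Bb v) Bp) (borel_sing l Hl s0))).
          intros t Lt Ht. destruct (pba_tri F v t) as [H1|[H1|H1]]; auto.
          right. apply (lexle_antisym F); auto. }
        rewrite (sing0 l Hl HM HN) in H1.
        assert (Lt : lexlt ltA w s0) by (eapply after_lt; eauto).
        assert (Phi w <= Phi s0) by (apply (phi_mono F l Hl HM); right; auto).
        apply NL. exists s0. split; auto. split; auto. change (Phi s0 = Phi w). lra.
      * assert (1 <= b0).
        { rewrite <- (mu_full HM). apply (mu_mono HM (borel_full A)). apply borel_union2; auto.
          intros t Lt _. destruct (pba_tri F v t) as [H1|[H1|H1]]; auto. exfalso; eauto. }
        lra.
    + intros Hx.
      destruct (surj F l Hl HS HM HN HR (ex_intro _ w0 Lw0) (x := x) ltac:(lra))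
        as [w [Lw [Ew [NL Hmax]]]].
      fold Phi in Ew, Hmax.
      destruct (pba_tri F v w) as [H1|[H1|H1]].
      * exfalso.
        destruct (closed_min F (closed_inter LC (findet_closed (@prefix_findet A v)))
                   (ex_intro _ w0 (conj Lw0 Pw0))) as [s0 [[Ls0 Ps0] Hs0]].
        assert (Phi s0 <= a0 + mu (inter (fun t => t = s0) L)).
        { rewrite PE. eapply Rle_trans; [|apply (mu_sub HM); [auto|apply (borel_sing l Hl)]].
          apply (mu_mono HM (BL s0) (borel_union2 (Bb v) (borel_sing l Hl s0))).
          intros t Lt Ht. destruct (pba_tri F v t) as [H2|[H2|H2]]; auto.
          right. apply (lexle_antisym F); auto.
          exfalso. eapply lexle_lt_false; eauto. eapply after_lt; eauto. }
        rewrite (sing0 l Hl HM HN) in H.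
        assert (lexle ltA s0 w) by (apply Hmax; auto; lra).
        eapply lexle_lt_false; eauto. eapply before_lt; eauto.
      * split. lra. exists w. split; auto. split.
        rewrite (phi_iota2 NL). fold Phi. rewrite Ew; auto. split; auto.
      * exfalso. assert (b0 <= Phi w).
        { rewrite PE. apply (mu_mono HM); auto. apply borel_union2; auto.
          intros t _ [H2|H2]; right.
          -- eapply lexlt_trans; eauto. eapply before_lt; eauto. eapply after_lt; eauto.
          -- eapply after_lt; eauto. }
        lra.
  - exists (mu (inter (before ltA u) L) - a0).
    intros x y [Hx [w [Lw [Hphi [_ Pw]]]]] [w' [Lw' [Hphi' Hy]]].
    destruct (phi_iota Hphi) as [Ex NL]. destruct (phi_iota Hphi') as [Ex' NL'].
    assert (w' = w).
    { destruct (lex_tri F w w') as [E|[E|E]]; auto; exfalso.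
      - apply NL. exists w'. split; auto. split; auto. congruence.
      - apply NL'. exists w. split; auto. split; auto. congruence. }
    subst w'. unfold kappa, phi in Hy. simpl in Hy. subst y.
    subst v. apply prefix_cons in Pw as [Pa Pu].
    rewrite (decomp F l Hl HM Pu).
    assert (Ew : phi_mu ltA L mu w = a0 + mu (inter (fun t => prefix (a :: u) t /\ lexle ltA t w) L)).
    { apply (decomp F l Hl HM). apply prefix_cons; auto. }
    rewrite <- Ex, Ew.
    rewrite <- (Hinv _ (borel_inter (borel_cyl u) (BL (shift w)))).
    rewrite (mu_extL HM (fun t => prefix u (shift t) /\ lexle ltA (shift t) (shift w))
                        (fun t => prefix (a :: u) t /\ lexle ltA t w)).
    ring.
    intros t Lt. split.
    + intros [H1 H2].
      assert (Ta : t O = a).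
      { apply NNPP; intros Hne. apply Hnls. exists (t O), a. split; auto. split; auto.
        exists t. split; auto. exists O. intros i Hi. apply prefix_cons. split; auto. auto. }
      split. apply prefix_cons; auto. apply (lexle_shift F); auto. congruence.
    + intros [H1 H2]. apply prefix_cons in H1 as [H1 H3]. split; auto.
      apply (lexle_shift F); auto. congruence.
Qed.
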